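(* Let $A$ be a finite alphabet, $R$ a symmetric relation on $A$ (set of pairs $(a,b)$), and $I$ a finite set of circular words over $A$; let $S=(A,I,R)$ be the $(1,3)$-CSSH circular splicing system with rules $a\#1\$b\#1$ for $(a,b)\in R$. Then the flat splicing system $\mathcal{S}=(A,Y,R')$ with $Y=Lin(I)$ and $R'=\{\langle a\mid 1-1\mid b\rangle : (a,b)\in R\}$ satisfies $L(\mathcal{S})=Lin(L(S))$. Conversely, let $\mathcal{S}=(A,Y,R')$ be a flat splicing system where $Y\subseteq A^+$ is a finite language closed under the conjugacy relation, $R'=\{\langle a\mid 1-1\mid b\rangle : (a,b)\in R\}$ and $R$ is a symmetric relation on $A$. Let $I=\sim Y$. Then $L(\mathcal{S})=Lin(L(S))$, where $S=(A,I,R)$ is the $(1,3)$-CSSH system with rules $a\#1\$b\#1$ for $(a,b)\in R$.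
   Context: $1$ denotes the empty word, $A^+=A^*\setminus\{1\}$. Conjugacy: $xy\sim yx$; a circular word $\sim w$ is the conjugacy class of $w$; for a set $L$ of circular words, $Lin(L)=\{w\in A^*:\ \sim w\in L\}$; for $Y\subseteq A^*$, $\sim Y=\{\sim w:w\in Y\}$. $(1,3)$-CSSH circular splicing: the rule $a\#1\$b\#1$ (with $a,b$ letters) applied to circular words $\sim xa$ and $\sim yb$ produces $\sim xayb$. $L(S)$ is the smallest set of circular words containing $I$ and closed under applying rules of $R$ to any two of its elements. Flat splicing system $\mathcal{S}=(A,Y,R')$: rules $\langle\alpha\mid\beta-\gamma\mid\delta\rangle$; applying it to $u=x\alpha\beta y$ and $v=\gamma z\delta$ yields $x\alpha\gamma z\delta\beta y$. In particular $\langle a\mid1-1\mid b\rangle$ applied to $u=xay$ and $v=zb$ yields $xazby$. $L(\mathcal{S})$ is the smallest language containing $Y$ and closed under applying rules of $R'$. *)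

(* Defs.v *)
From mathcomp Require Import all_boot.
From mathcomp Require Import zify.
Set Implicit Arguments. Unset Strict Implicit. Unset Printing Implicit Defensive.

Section Words.
Variable A : finType.

Definition conjb (u v : seq A) : bool :=
  [exists i : 'I_(size u).+1, rot i u == v].

Lemma conjbP u v : reflect (exists x y, u = x ++ y /\ v = y ++ x) (conjb u v).
Proof.
apply: (iffP existsP) => [[i /eqP <-]|[x [y [-> ->]]]].
  by exists (take i u), (drop i u); rewrite cat_take_drop.
have hi : size x < (size (x ++ y)).+1 by rewrite size_cat; lia.
by exists (Ordinal hi); rewrite /= rot_size_cat.
Qed.

Lemma conjb_refl u : conjb u u.
Proof. by apply/conjbP; exists [::], u; rewrite cats0. Qed.

Lemma conjb_sym u v : conjb u v -> conjb v u.
Proof. by move/conjbP=> [x [y [-> ->]]]; apply/conjbP; exists y, x. Qed.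

Lemma conjb_trans u v w : conjb u v -> conjb v w -> conjb u w.
Proof.
move=> /existsP [i /eqP <-] /existsP [j /eqP <-].
have h : rot_add u i j < (size u).+1 by rewrite ltnS leq_rot_add.
by apply/existsP; exists (Ordinal h); rewrite /= rot_rot_add.
Qed.

Definition canon (w : seq A) : seq A := choose (conjb w) w.

Lemma canon_conj w : conjb w (canon w).
Proof. exact: (chooseP (conjb_refl w)). Qed.

Lemma canon_eq u v : conjb u v -> canon u = canon v.
Proof.
move=> huv; rewrite /canon (@eq_choose _ (conjb u) (conjb v)).
  by apply: choose_id; [exact: conjb_sym | exact: conjb_refl].
move=> x; apply/idP/idP => h.
  exact: conjb_trans (conjb_sym huv) h.
exact: conjb_trans huv h.
Qed.

Lemma canon_idem w : canon (canon w) == canon w.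
Proof. by apply/eqP; apply: canon_eq; apply: conjb_sym; apply: canon_conj. Qed.

(* circular words = conjugacy classes, represented by canonical representatives *)
Definition circw : Type := {w : seq A | canon w == w}.

Definition cw (w : seq A) : circw := exist _ (canon w) (canon_idem w).

Definition Lin (L : circw -> Prop) : seq A -> Prop := fun w => L (cw w).

(* L(S) for the (1,3)-CSSH circular splicing system S = (A, I, R),
   rules a#1$b#1 for (a,b) in R:  ~xa, ~yb  |->  ~xayb *)
Inductive LcircS (I : circw -> Prop) (R : rel A) : circw -> Prop :=
  | LcircS_init c : I c -> LcircS I R c
  | LcircS_step x a y b : R a b ->
      LcircS I R (cw (rcons x a)) -> LcircS I R (cw (rcons y b)) ->
      LcircS I R (cw (rcons x a ++ rcons y b)).

(* L(S') for the flat splicing system S' = (A, Y, R'),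
   R' = { <a|1-1|b> : (a,b) in R }:  u = x a y, v = z b  |->  x a z b y *)
Inductive LflatS (Y : seq A -> Prop) (R : rel A) : seq A -> Prop :=
  | LflatS_init w : Y w -> LflatS Y R w
  | LflatS_step x a y z b : R a b ->
      LflatS Y R (x ++ a :: y) -> LflatS Y R (rcons z b) ->
      LflatS Y R (x ++ a :: (z ++ b :: y)).

End Words.

(* Main.v *)
Require Import Defs.
From mathcomp Require Import all_boot.
From mathcomp Require Import zify.
Set Implicit Arguments. Unset Strict Implicit.

Section Aux.
Variable A : finType.

Lemma cwE (u v : seq A) : conjb u v -> cw u = cw v.
Proof. move=> h; apply: val_inj => /=; exact: canon_eq. Qed.

Lemma cw_conj (u v : seq A) : cw u = cw v -> conjb u v.
Proof.
move/(congr1 val) => /= h.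
have h1 := canon_conj u; rewrite h in h1.
exact: conjb_trans h1 (conjb_sym (canon_conj v)).
Qed.

Lemma drop_catl (k : nat) (x t : seq A) : k <= size x -> drop k (x ++ t) = drop k x ++ t.
Proof.
move=> hk; rewrite drop_cat; case: ltnP => // h.
have -> : k = size x by lia.
by rewrite subnn drop0 drop_size.
Qed.

Variable R : rel A.
Hypothesis hR : symmetric R.
Variable Y : seq A -> Prop.
Variable I : circw A -> Prop.
Hypothesis hYI : forall w, Y w <-> I (cw w).

Lemma fwd w : LflatS Y R w -> LcircS I R (cw w).
Proof.
elim=> [v /hYI h|x a y z b hab _ IH1 _ IH2]; first by constructor.
have e1 : cw (x ++ a :: y) = cw (rcons (y ++ x) a).
  apply: cwE; apply/conjbP; exists (rcons x a), y.
  by rewrite cat_rcons rcons_cat.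
have e2 : cw (x ++ a :: (z ++ b :: y)) = cw (rcons (y ++ x) a ++ rcons z b).
  apply: cwE; apply/conjbP; exists (rcons x a ++ rcons z b), y.
  by rewrite rcons_cat -!catA cat_rcons -cats1 -catA.
rewrite e1 in IH1; rewrite e2; exact: LcircS_step.
Qed.

Lemma bwd c : LcircS I R c -> forall w, cw w = c -> LflatS Y R w.
Proof.
elim=> [c0 hc w hw|x a y b hab _ IH1 _ IH2 w hw].
  by constructor; apply/hYI; rewrite hw.
have := cw_conj (esym hw) => /conjbP [p [q [hs ->]]].
have [p' [q' [hs' hw']]] : exists p' q', rcons x a ++ rcons y b = p' ++ q' /\
    q ++ p = q' ++ p' /\ (q' != [::] \/ p' = [::]).
  case: q hs => [|c1 q] hs.
    by exists [::], p; rewrite cats0 /= in hs *; rewrite hs; split => //; split => //; right.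
  by exists p, (c1 :: q); split => //; split => //; left.
move: hw' => [-> hq]; clear hs p q hw; rename hs' into hs.
set s := x ++ a :: (y ++ [:: b]).
have hsE : rcons x a ++ rcons y b = s by rewrite /s cat_rcons cats1.
have hp : p' = take (size p') s by rewrite -hsE hs take_size_cat.
have hq' : q' = drop (size p') s by rewrite -hsE hs drop_size_cat.
have hsz : size s = size p' + size q' by rewrite -hsE hs size_cat.
have IHy : LflatS Y R (rcons y b) by exact: IH2.
case: (leqP (size p') (size x)) => hk.
  rewrite hp hq' /s takel_cat // drop_catl //.
  rewrite -catA /= -[(y ++ _) ++ _]catA /=.
  apply: (LflatS_step (x := drop (size p') x) (y := take (size p') x) (z := y)) => //.
  apply: IH1; apply: cwE; apply/conjbP.
  exists (drop (size p') x ++ [:: a]), (take (size p') x).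
  by split; [rewrite -catA | rewrite catA cat_take_drop cats1].
have hq0 : q' != [::].
  case: hq => // hp0; move: hk; rewrite hp0 /=; lia.
have hqs : 0 < size q' by case: q' hq0 {hq hq' hsz hs}.
set j := size p' - (size x).+1.
have hj : j <= size y by rewrite /s /= size_cat /= size_cat /= in hsz; lia.
have hk1 : size p' = size x + (j.+1) by lia.
have hk2 : size p' = j.+1 + size x by lia.
have eT : take (size p') s = x ++ a :: take j y.
  by rewrite hk1 takeD take_size_cat // drop_size_cat //= takel_cat.
have eD : drop (size p') s = drop j y ++ [:: b].
  by rewrite hk2 -drop_drop drop_size_cat //= drop_catl.
rewrite hp hq' eT eD.
rewrite -catA /=.
apply: (LflatS_step (x := drop j y) (y := take j y) (z := x)); first by rewrite hR.
  apply: IH2; apply: cwE; apply/conjbP.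
  exists (drop j y ++ [:: b]), (take j y).
  by split; [rewrite -catA | rewrite catA cat_take_drop cats1].
by apply: IH1.
Qed.

Lemma mainlem w : LflatS Y R w <-> LcircS I R (cw w).
Proof. split; [exact: fwd | move=> h; exact: (bwd h)]. Qed.

End Aux.

Theorem proposition11p7 (A : finType) (R : rel A) (hR : symmetric R) :
  (* direct part: I a finite set of circular words, Y = Lin(I) *)
  (forall I : seq (circw A),
     forall w : seq A,
       LflatS (Lin (fun c => c \in I)) R w <-> Lin (LcircS (fun c => c \in I) R) w)
  /\
  (* converse: Y finite, Y ⊆ A^+, Y closed under conjugacy, I = ~Y *)
  (forall Y : seq (seq A),
     (forall u, u \in Y -> u != [::]) ->
     (forall u v, conjb u v -> u \in Y -> v \in Y) ->
     forall w : seq A,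
       LflatS (fun u => u \in Y) R w
       <-> Lin (LcircS (fun c => c \in map (@cw A) Y) R) w).
Proof.
split.
  move=> I w; apply: mainlem => //.
move=> Y _ hY w; apply: mainlem => // v; split; first exact: map_f.
move/mapP => [u hu e]; apply: (hY u) => //; apply: cw_conj; by rewrite e.
Qed.
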